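(* Let $\mathcal G$ be a continuous game with players $k\in\{1,\dots,K\}$, action sets $\mathcal Z_k=\mathbb R^{n_k}$ and twice continuously differentiable cost functions $f_k:\mathbb R^n\to\mathbb R$ ($n=n_1+\dots+n_K$), and let $F=F_{\mathcal G}:\mathbb R^n\to\mathbb R^n$ be its gradient operator. Suppose $\mathcal G$ is monotone and that there are $\ell,\Lambda>0$ with $\|F(z)-F(z')\|\le \ell\|z-z'\|$ and $\|\partial F(z)-\partial F(z')\|_\sigma\le\Lambda\|z-z'\|$ for all $z,z'\in\mathbb R^n$. Let $z^{(-1)},z^{(0)}\in\mathbb R^n$ and suppose there is $z^*\in\mathbb R^n$ with $F(z^* )=0$, $\|z^*-z^{(-1)}\|\le D$ and $\|z^*-z^{(0)}\|\le D$. Let $\eta\le\min\{\frac{1}{150\ell},\frac{1}{1711D\Lambda}\}$ and let $z^{(t)}$ be the iterates of the optimistic gradient algorithm $z^{(t+1)}=z^{(t)}-2\eta F(z^{(t)})+\eta F(z^{(t-1)})$, $t\ge0$. Then for every integer $T\ge1$, $$\|F(z^{(T)})\|\le\frac{60D}{\eta\sqrt T}.$$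
   Context: For the game, $z=(z_1,\dots,z_K)$ with $z_k\in\mathbb R^{n_k}$, $z_{-k}$ denotes the actions of all players other than $k$, and $F_{\mathcal G}(z):=(\nabla_{z_1}f_1(z),\dots,\nabla_{z_K}f_K(z))\in\mathbb R^n$. The game is monotone if $\langle F_{\mathcal G}(z')-F_{\mathcal G}(z),z'-z\rangle\ge0$ for all $z,z'$. $\partial F$ denotes the Jacobian of $F$, $\|\cdot\|$ the Euclidean norm and $\|\cdot\|_\sigma$ the spectral norm. *)

(* Defs.v *)
From HB Require Import structures.
From mathcomp Require Import all_boot all_order all_algebra.
From mathcomp Require Import all_classical all_reals all_analysis.
Set Implicit Arguments. Unset Strict Implicit. Unset Printing Implicit Defensive.
Import Order.TTheory GRing.Theory Num.Theory.
Import numFieldNormedType.Exports.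
Local Open Scope classical_set_scope.
Local Open Scope ring_scope.

Section Defs.
Variable R : realType.

Definition ebasis (n : nat) (i : 'I_n) : 'cV[R]_n := delta_mx i ord0.

Definition enorm (n : nat) (v : 'cV[R]_n) : R := Num.sqrt (\sum_i (v i ord0) ^+ 2).
Definition dotp (n : nat) (u v : 'cV[R]_n) : R := \sum_i u i ord0 * v i ord0.

Definition specnorm (n : nat) (A : 'M[R]_n) : R :=
  sup [set enorm (A *m v) | v in [set v : 'cV[R]_n | enorm v <= 1]].

Definition pderiv (n : nat) (i : 'I_n) (g : 'cV[R]_n -> R) (x : 'cV[R]_n) : R :=
  derive g x (ebasis i).

Definition C2 (n : nat) (g : 'cV[R]_n -> R) : Prop :=
  (forall i x, derivable g x (ebasis i)) /\
  (forall i, continuous (pderiv i g)) /\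
  (forall i j x, derivable (pderiv i g) x (ebasis j)) /\
  (forall i j, continuous (pderiv j (pderiv i g))).

(* Game gradient operator: the players are 'I_K, coordinate i of the joint
   action z in R^n is controlled by player (owner i), so that player k's
   action z_k consists of the coordinates owned by k, and
   F(z)_i = d f_(owner i) / d z_i (z), i.e. F = (grad_{z_k} f_k)_k
   up to a fixed reordering of coordinates. *)
Definition gameF (n K : nat) (owner : 'I_n -> 'I_K) (f : 'I_K -> 'cV[R]_n -> R)
  (z : 'cV[R]_n) : 'cV[R]_n :=
  \col_i pderiv i (f (owner i)) z.

Definition jac (n : nat) (F : 'cV[R]_n -> 'cV[R]_n) (z : 'cV[R]_n) : 'M[R]_n :=
  \matrix_(i, j) pderiv j (fun y => F y i ord0) z.

(* Optimistic gradient iterates: og_pair F eta zm1 z0 t = (z^(t-1), z^(t)) *)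
Fixpoint og_pair (n : nat) (F : 'cV[R]_n -> 'cV[R]_n) (eta : R)
  (zm1 z0 : 'cV[R]_n) (t : nat) : 'cV[R]_n * 'cV[R]_n :=
  match t with
  | 0 => (zm1, z0)
  | t'.+1 => let p := og_pair F eta zm1 z0 t' in
             (p.2, p.2 - (2 * eta) *: F p.2 + eta *: F p.1)
  end.

Definition og_iter (n : nat) (F : 'cV[R]_n -> 'cV[R]_n) (eta : R)
  (zm1 z0 : 'cV[R]_n) (t : nat) : 'cV[R]_n := (og_pair F eta zm1 z0 t).2.

End Defs.

(* Main.v *)
Require Import Defs.
From HB Require Import structures.
From mathcomp Require Import all_boot all_order all_algebra.
From mathcomp Require Import all_classical all_reals all_analysis.
From mathcomp Require Import ring lra.
Import Order.TTheory GRing.Theory Num.Theory.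
Local Open Scope ring_scope.

Definition sq {R : realType} {n : nat} (v : 'cV[R]_n) := dotp v v.

Lemma dotpC {R : realType} {n : nat} (u v : 'cV[R]_n) : dotp u v = dotp v u.
Proof. by rewrite /dotp; apply: eq_bigr => i _; rewrite mulrC. Qed.
Lemma dotpDl {R : realType} {n : nat} (u v w : 'cV[R]_n) : dotp (u + v) w = dotp u w + dotp v w.
Proof. by rewrite /dotp -big_split; apply: eq_bigr => i _; rewrite mxE mulrDl. Qed.
Lemma dotpNl {R : realType} {n : nat} (u v : 'cV[R]_n) : dotp (- u) v = - dotp u v.
Proof. by rewrite /dotp -sumrN; apply: eq_bigr => i _; rewrite mxE mulNr. Qed.
Lemma dotpZl {R : realType} {n : nat} a (u v : 'cV[R]_n) : dotp (a *: u) v = a * dotp u v.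
Proof. by rewrite /dotp mulr_sumr; apply: eq_bigr => i _; rewrite mxE mulrA. Qed.
Lemma dotpDr {R : realType} {n : nat} (u v w : 'cV[R]_n) : dotp w (u + v) = dotp w u + dotp w v.
Proof. by rewrite dotpC dotpDl !(dotpC w). Qed.
Lemma dotpNr {R : realType} {n : nat} (u v : 'cV[R]_n) : dotp v (- u) = - dotp v u.
Proof. by rewrite dotpC dotpNl dotpC. Qed.
Lemma dotpZr {R : realType} {n : nat} a (u v : 'cV[R]_n) : dotp v (a *: u) = a * dotp v u.
Proof. by rewrite dotpC dotpZl dotpC. Qed.
Lemma sq_ge0 {R : realType} {n : nat} (v : 'cV[R]_n) : 0 <= sq v.
Proof. by rewrite /sq /dotp; apply: sumr_ge0 => i _; rewrite -expr2 sqr_ge0. Qed.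
Lemma enormE {R : realType} {n : nat} (v : 'cV[R]_n) : enorm v = Num.sqrt (sq v).
Proof. by rewrite /enorm /sq /dotp; congr Num.sqrt; apply: eq_bigr => i _; rewrite expr2. Qed.
Lemma enorm_ge0 {R : realType} {n : nat} (v : 'cV[R]_n) : 0 <= enorm v.
Proof. by rewrite enormE sqrtr_ge0. Qed.
Lemma enorm_sq {R : realType} {n : nat} (v : 'cV[R]_n) : enorm v ^+ 2 = sq v.
Proof. by rewrite enormE sqr_sqrtr // sq_ge0. Qed.

Ltac expd := rewrite /sq ?dotpDl ?dotpDr ?dotpNl ?dotpNr ?dotpZl ?dotpZr.

Lemma sq_addle {R : realType} {n : nat} (a b : 'cV[R]_n) : sq (a + b) <= 2 * sq a + 2 * sq b.
Proof.
have := sq_ge0 (a - b). expd. have := dotpC a b. lra.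
Qed.
Lemma sq_suble {R : realType} {n : nat} (a b : 'cV[R]_n) : sq (a - b) <= 2 * sq a + 2 * sq b.
Proof.
have := sq_ge0 (a + b). expd. have := dotpC a b. lra.
Qed.
Lemma sqZ {R : realType} {n : nat} c (a : 'cV[R]_n) : sq (c *: a) = c ^+ 2 * sq a.
Proof. expd. by rewrite mulrA expr2. Qed.
Lemma sqN {R : realType} {n : nat} (a : 'cV[R]_n) : sq (- a) = sq a.
Proof. expd. by rewrite opprK. Qed.
Lemma sq_swap {R : realType} {n : nat} (a b : 'cV[R]_n) : sq (a - b) = sq (b - a).
Proof. by rewrite -sqN opprB. Qed.

Lemma decr_alg {R : realType} {n : nat} (p q r s : 'cV[R]_n) c :
  dotp (q - p) r <= 0 -> sq (q - r) <= c * sq (r - s) -> 0 <= c -> 4 * c <= 1 ->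
  sq q + sq (q - r) <= sq p + sq (p - s).
Proof.
move=> h1 h2 hc hc4.
have I2 : sq (r - s) <= 2 * sq (r - p) + 2 * sq (p - s).
  have -> : r - s = (r - p) + (p - s) by rewrite addrA subrK.
  exact: sq_addle.
have I3 := ler_wpM2l hc I2.
have I4 : 0 <= (1 - 4 * c) * sq (r - p) by apply: mulr_ge0; [lra| exact: sq_ge0].
have I5 : 0 <= (1 - 4 * c) * sq (p - s) by apply: mulr_ge0; [lra| exact: sq_ge0].
have I6 : 0 <= sq (p - s) by exact: sq_ge0.
have I1 : sq q - sq p + sq (r - p) - sq (q - r) = 2 * dotp (q - p) r.
  expd. have := dotpC q r. have := dotpC p r. have := dotpC q p. lra.
lra.
Qed.

Lemma sum_alg {R : realType} {n : nat} (b r s : 'cV[R]_n) (eta : R) :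
  0 <= eta -> 0 <= dotp r b ->
  sq ((b + eta *: s) - eta *: r) <= sq (b + eta *: s) + eta ^+ 2 * (sq (r - s) - sq s).
Proof.
move=> he hm. have hp : 0 <= eta * dotp r b by apply: mulr_ge0.
expd. rewrite ?[dotp s r]dotpC ?[dotp b r]dotpC ?[dotp b s]dotpC. rewrite expr2. lra.
Qed.

Lemma psi_bound {R : realType} {n : nat} (u r s : 'cV[R]_n) c :
  sq (u - r) <= c * sq s -> 0 <= c -> c <= 1/100 ->
  sq u + sq (u - s) <= 6 * sq r + 3 * sq s.
Proof.
move=> h hc hc1.
have h1 : sq u <= 2 * sq r + 2 * sq (u - r).
  have {1}-> : u = r + (u - r) by rewrite addrC subrK.
  exact: sq_addle.
have h2 := sq_suble u s.
have h3 : 0 <= (1 - 6 * c) * sq s by apply: mulr_ge0; [lra | exact: sq_ge0].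
lra.
Qed.

Lemma fin_bound {R : realType} {n : nat} (u r s : 'cV[R]_n) c :
  sq (u - r) <= c * sq s -> 0 <= c -> c <= 1/100 ->
  sq r <= 3 * (sq u + sq (u - s)).
Proof.
move=> h hc hc1.
have h1 : sq r <= 2 * sq u + 2 * sq (u - r).
  have {1}-> : r = u - (u - r) by rewrite opprB addrC subrK.
  exact: sq_suble.
have h2 : sq s <= 2 * sq u + 2 * sq (u - s).
  have {1}-> : s = u - (u - s) by rewrite opprB addrC subrK.
  exact: sq_suble.
have h3 := ler_wpM2l hc h2.
have h4 : 0 <= (1 - 4 * c) * sq u by apply: mulr_ge0; [lra | exact: sq_ge0].
have h5 : 0 <= (3 - 4 * c) * sq (u - s) by apply: mulr_ge0; [lra | exact: sq_ge0].
lra.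
Qed.

Lemma og_main {R : realType} {n : nat} (F : 'cV[R]_n -> 'cV[R]_n) (ell eta : R)
  (zm1 z0 zstar : 'cV[R]_n) (D : R) (T : nat) :
  (forall z z', 0 <= dotp (F z' - F z) (z' - z)) ->
  (forall z z', sq (F z - F z') <= ell ^+ 2 * sq (z - z')) ->
  F zstar = 0 -> sq (zstar - zm1) <= D ^+ 2 -> sq (zstar - z0) <= D ^+ 2 -> 0 <= D ->
  0 < eta -> (eta * ell) ^+ 2 <= 1/100 ->
  T%:R * eta ^+ 2 * sq (F (og_iter F eta zm1 z0 T)) <= 108 * D ^+ 2.
Proof.
move=> hmono hL hstar hDm1 hD0 hD heta hc1.
set c := (eta * ell) ^+ 2.
have {hc1} hc1 : c <= 1/100 by exact: hc1.
have hc : 0 <= c by rewrite /c sqr_ge0.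
have he2 : 0 <= eta ^+ 2 by rewrite sqr_ge0.
pose Z k := (og_pair F eta zm1 z0 k).1.
pose G k := F (Z k).
pose W k := Z k.+1 + eta *: G k.
have Zrec k : Z k.+2 = Z k.+1 - (2 * eta) *: G k.+1 + eta *: G k by [].
have Lip2 a b : eta ^+ 2 * sq (F a - F b) <= c * sq (a - b).
  have := ler_wpM2l he2 (hL a b). rewrite /c exprMn. lra.
have Lip a b v : a - b = eta *: v -> sq (F a - F b) <= c * sq v.
  move=> e; apply: le_trans (hL a b) _; rewrite e sqZ /c exprMn. lra.
have hWS k : W k.+1 - W k = - (eta *: G k.+1).
  rewrite /W Zrec; apply/matrixP => i j; rewrite !mxE. ring.
have hWZ k : W k.+1 - Z k.+1 = eta *: (G k - G k.+1).
  rewrite /W Zrec; apply/matrixP => i j; rewrite !mxE. ring.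
have hWZ0 k : W k - Z k.+1 = eta *: G k.
  rewrite /W; apply/matrixP => i j; rewrite !mxE. ring.
have hZZ k : Z k.+2 - Z k.+1 = eta *: (G k - 2%:R *: G k.+1).
  rewrite Zrec; apply/matrixP => i j; rewrite !mxE. ring.
pose Psi k := sq (F (W k)) + sq (F (W k) - G k).
have decr k : Psi k.+1 <= Psi k.
  have hc4 : 4 * c <= 1 by lra.
  apply: (decr_alg _ _ _ _ c) => //.
    have := hmono (W k) (W k.+1). rewrite hWS dotpNr dotpZr => h.
    rewrite /G; nra.
  rewrite sq_swap; apply: Lip.
  by rewrite -opprB hWZ -scalerN opprB.
have Psi_mono k m : (k <= m)%N -> Psi m <= Psi k.
  elim: m => [|m IH]; first by rewrite leqn0 => /eqP ->.
  rewrite leq_eqVlt => /orP [/eqP -> // | ]; rewrite ltnS => /IH h.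
  exact: le_trans (decr m) h.
pose E k := sq (W k - zstar).
have Estep k : E k.+1 <= E k + eta ^+ 2 * (sq (G k.+1 - G k) - sq (G k)).
  have e1 : W k.+1 - zstar = ((Z k.+1 - zstar) + eta *: G k) - eta *: G k.+1.
    have := hWS k => h. rewrite -[W k.+1](subrK (W k)) h.
    rewrite /W; apply/matrixP => i j; rewrite !mxE. ring.
  have e2 : W k - zstar = (Z k.+1 - zstar) + eta *: G k.
    rewrite /W; apply/matrixP => i j; rewrite !mxE. ring.
  rewrite /E e1 e2; apply: sum_alg; first lra.
  have := hmono zstar (Z k.+1). by rewrite hstar subr0.
pose A N := \sum_(k < N) sq (G k).
have AS N : A N.+1 = A N + sq (G N) by rewrite /A big_ord_recr.
have LB M : eta ^+ 2 * sq (G M.+2 - G M.+1) <= eta ^+ 2 * (c * (2 * sq (G M) + 8 * sq (G M.+1))).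
  apply: ler_wpM2l => //.
  apply: le_trans (Lip _ _ _ (hZZ M)) _; apply: ler_wpM2l => //.
  apply: le_trans (sq_suble _ _) _; rewrite sqZ; lra.
have J M : E M.+1 + eta ^+ 2 * ((1 - 10 * c) * A M.+1 + 2 * c * sq (G M))
           <= E 0 + eta ^+ 2 * sq (G 1 - G 0).
  elim: M => [|M IH].
    have h0 : 0 <= eta ^+ 2 * (c * sq (G 0)) by apply: mulr_ge0 => //; apply: mulr_ge0 => //; exact: sq_ge0.
    have := Estep 0. rewrite AS /A big_ord0. lra.
  have := Estep M.+1. have := LB M. rewrite (AS M.+1). lra.
have E0b : E 0 + eta ^+ 2 * sq (G 1 - G 0) <= 2 * D ^+ 2 + 6 * c * D ^+ 2.
  have e0 : W 0 - zstar = (z0 - zstar) + eta *: (F zm1 - F zstar).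
    rewrite hstar /W /G; apply/matrixP => i j; rewrite !mxE /=. ring.
  have h1 : E 0 <= 2 * sq (z0 - zstar) + 2 * (eta ^+ 2 * sq (F zm1 - F zstar)).
    by rewrite /E e0 -sqZ; apply: sq_addle.
  have h2 := Lip2 zm1 zstar.
  have h3 := Lip2 z0 zm1.
  have h4 : sq (z0 - zm1) <= 2 * sq (z0 - zstar) + 2 * sq (zstar - zm1).
    have -> : z0 - zm1 = (z0 - zstar) + (zstar - zm1) by rewrite addrA subrK.
    exact: sq_addle.
  have h5 := ler_wpM2l hc h4.
  have h6 := ler_wpM2l hc hDm1.
  move: h2; rewrite (sq_swap zm1) => h2.
  have hD0' : sq (z0 - zstar) <= D ^+ 2 by rewrite sq_swap.
  have h7 := ler_wpM2l hc hD0'.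
  have -> : G 1 - G 0 = F z0 - F zm1 by [].
  lra.
have Ab N : eta ^+ 2 * A N.+1 <= 3 * D ^+ 2.
  have := J N. have := E0b.
  have hE : 0 <= E N.+1 by exact: sq_ge0.
  have hA : 0 <= eta ^+ 2 * A N.+1 by apply: mulr_ge0 => //; apply: sumr_ge0 => i _; exact: sq_ge0.
  have hq : 0 <= eta ^+ 2 * (c * sq (G N)) by apply: mulr_ge0 => //; apply: mulr_ge0 => //; exact: sq_ge0.
  have h1 : 0 <= (1/100 - c) * (eta ^+ 2 * A N.+1) by apply: mulr_ge0 => //; lra.
  have h2 : 0 <= (1/100 - c) * D ^+ 2 by apply: mulr_ge0; [lra | exact: sqr_ge0].
  lra.
have PsiB k : Psi k <= 6 * sq (G k.+1) + 3 * sq (G k).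
  apply: (psi_bound _ _ _ c) => //; apply: Lip; exact: hWZ0.
have SP N : \sum_(k < N) Psi k <= 6 * A N.+1 + 3 * A N.
  elim: N => [|N IH]; first by rewrite big_ord0 /A !big_ord0 big_ord1 /=; have := sq_ge0 (G 0); lra.
  rewrite big_ord_recr /= (AS N.+1) (AS N). move: IH; rewrite (AS N). have := PsiB N. lra.
have Amon N : A N <= A N.+1 by rewrite AS; have := sq_ge0 (G N); lra.
have TP : T%:R * Psi T <= \sum_(k < T) Psi k.
  have -> : T%:R * Psi T = \sum_(k < T) Psi T by rewrite sumr_const card_ord mulr_natl.
  apply: ler_sum => k _; apply: Psi_mono; exact: ltnW.
have FB : sq (G T.+1) <= 3 * Psi T.
  apply: (fin_bound _ _ _ c) => //; apply: Lip; exact: hWZ0.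
have -> : og_iter F eta zm1 z0 T = Z T.+1 by [].
have ht : 0 <= T%:R :> R by [].
have f1 := ler_wpM2l (mulr_ge0 ht he2) FB.
have f2 := ler_wpM2l he2 TP.
have f3 := ler_wpM2l he2 (SP T).
have f4 := ler_wpM2l he2 (Amon T).
have f5 := Ab T.
rewrite -/(G T.+1). have := sqr_ge0 D. lra.
Qed.

Theorem theorem5 (R : realType) (n K : nat) (owner : 'I_n -> 'I_K)
  (f : 'I_K -> 'cV[R]_n -> R)
  (hC2 : forall k, C2 (f k))
  (hmono : forall z z' : 'cV[R]_n,
     0 <= dotp (gameF owner f z' - gameF owner f z) (z' - z))
  (ell Lam : R) (hell : 0 < ell) (hLam : 0 < Lam)
  (hLipF : forall z z' : 'cV[R]_n,
     enorm (gameF owner f z - gameF owner f z') <= ell * enorm (z - z'))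
  (hLipJ : forall z z' : 'cV[R]_n,
     specnorm (jac (gameF owner f) z - jac (gameF owner f) z')
       <= Lam * enorm (z - z'))
  (zm1 z0 zstar : 'cV[R]_n) (D : R)
  (hstar : gameF owner f zstar = 0)
  (hDm1 : enorm (zstar - zm1) <= D) (hD0 : enorm (zstar - z0) <= D)
  (eta : R) (heta : 0 < eta)
  (heta1 : eta * (150 * ell) <= 1) (heta2 : eta * (1711 * D * Lam) <= 1)
  (T : nat) (hT : (1 <= T)%N) :
  enorm (gameF owner f (og_iter (gameF owner f) eta zm1 z0 T))
    <= 60 * D / (eta * Num.sqrt (T%:R)).
Proof.
set F := gameF owner f.
have hD : 0 <= D by apply: le_trans (enorm_ge0 _) hD0.
have hL z z' : sq (F z - F z') <= ell ^+ 2 * sq (z - z').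
  rewrite -!enorm_sq. have := hLipF z z'. have := enorm_ge0 (F z - F z').
  have := enorm_ge0 (z - z'). rewrite -/F. move: (enorm (F z - F z')) (enorm (z - z')) => a b.
  rewrite !expr2. nra.
have sqD (v : 'cV[R]_n) : enorm v <= D -> sq v <= D ^+ 2.
  move=> h; rewrite -enorm_sq. have := enorm_ge0 v. move: (enorm v) h => a h ha. rewrite !expr2. nra.
have hc1 : (eta * ell) ^+ 2 <= 1/100.
  have h1 : 0 < eta * ell by apply: mulr_gt0.
  rewrite expr2. nra.
have M := og_main F ell eta zm1 z0 zstar D T hmono hL hstar (sqD _ hDm1) (sqD _ hD0) hD heta hc1.
set x := sq (F (og_iter F eta zm1 z0 T)) in M.
have hx : 0 <= x by exact: sq_ge0.
have hT0 : 0 < T%:R :> R by rewrite ltr0n.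
have ht := sqrtr_gt0 (T%:R : R). rewrite hT0 in ht.
rewrite enormE -/x ler_pdivlMr; last by apply: mulr_gt0.
have hs := sqrtr_ge0 x.
have hx2 := sqr_sqrtr hx. have ht2 := sqr_sqrtr (ltW hT0).
move: (Num.sqrt x) (Num.sqrt (T%:R : R)) hs ht hx2 ht2 => s t hs ht hx2 ht2.
have P0 : 0 <= s * (eta * t) by apply: mulr_ge0 => //; apply: mulr_ge0; [exact: ltW | exact: ltW].
have P2 : (s * (eta * t)) ^+ 2 <= 108 * D ^+ 2.
  rewrite !exprMn hx2 ht2. move: M. rewrite -/x. lra.
move: (s * (eta * t)) P0 P2 => P P0 P2. rewrite expr2 in P2. have := sqr_ge0 D. rewrite expr2. nra.
Qed.
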